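(* Let $R$ be a Noetherian ring and $J_1,J_2\subseteq I$ ideals. Assume that the pair of image ideals $\overline{J_2}\subseteq\overline I$ in $\overline R=R/J_1$ is Aluffi torsion-free. Suppose there is a minimal generating set $f_1,\ldots,f_s$ of $J_1$ such that (1) $J_1=(f_1,\ldots,f_s)\subseteq I$ is strongly Aluffi torsion-free, and (2) the images $\widetilde{f_1},\ldots,\widetilde{f_s}$ form a regular sequence in $\widetilde R=R/J_2$. Then the pair $J_2\subseteq I$ is Aluffi torsion-free.
   Context: A pair of ideals $J\subseteq I$ in a ring $R$ is called Aluffi torsion-free if $J\cap I^n=JI^{n-1}$ for all $n\ge1$ (with $I^0=R$). For an ideal $J=(f_1,\ldots,f_t)\subseteq I$ with given ordered generators, the pair is called strongly Aluffi torsion-free if $(f_1,\ldots,f_i)\subseteq I$ is Aluffi torsion-free for each $i=1,\ldots,t$. *)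

(* Defs.v *)
From HB Require Import structures.
From mathcomp Require Import all_boot all_order all_algebra.
Set Implicit Arguments. Unset Strict Implicit. Unset Printing Implicit Defensive.
Import GRing.Theory.
Local Open Scope ring_scope.

Section Ideals.
Variable R : comNzRingType.

Definition is_ideal (I : R -> Prop) : Prop :=
  I 0 /\ (forall x y, I x -> I y -> I (x + y)) /\ (forall r x, I x -> I (r * x)).

Definition ideal_sub (I J : R -> Prop) : Prop := forall x, I x -> J x.
Definition ideal_eq (I J : R -> Prop) : Prop := forall x, I x <-> J x.

Definition gen (s : seq R) : R -> Prop :=
  fun x => exists r : 'I_(size s) -> R, x = \sum_(i < size s) r i * s`_i.

Definition ideal_add (I J : R -> Prop) : R -> Prop :=
  fun x => exists a b, I a /\ J b /\ x = a + b.
Definition ideal_cap (I J : R -> Prop) : R -> Prop := fun x => I x /\ J x.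
Definition ideal_mul (I J : R -> Prop) : R -> Prop :=
  fun x => exists (n : nat) (a b : 'I_n -> R),
    (forall k, I (a k) /\ J (b k)) /\ x = \sum_(k < n) a k * b k.
(* I^0 = R *)
Definition ideal_exp (I : R -> Prop) (n : nat) : R -> Prop :=
  iter n (ideal_mul I) (fun _ => True).

Definition noetherian : Prop :=
  forall I, is_ideal I -> exists s : seq R, ideal_eq I (gen s).

Definition aluffi_tf (J I : R -> Prop) : Prop :=
  forall n : nat, (1 <= n)%N ->
    ideal_eq (ideal_cap J (ideal_exp I n)) (ideal_mul J (ideal_exp I n.-1)).

Definition strongly_aluffi_tf (fs : seq R) (I : R -> Prop) : Prop :=
  forall i : nat, (1 <= i <= size fs)%N -> aluffi_tf (gen (take i fs)) I.

(* The image pair  J/K ⊆ I/K  in R/K is Aluffi torsion-free, expressed via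
   preimages in R: the preimage in R of the ideal of R/K generated by the
   image of an ideal L of R is L + K; preimages commute with intersections;
   and (I/K)^n = (I^n + K)/K, (J/K)(I/K)^(n-1) = (J I^(n-1) + K)/K. *)
Definition aluffi_tf_mod (K J I : R -> Prop) : Prop :=
  forall n : nat, (1 <= n)%N ->
    ideal_eq (ideal_cap (ideal_add J K) (ideal_add (ideal_exp I n) K))
             (ideal_add (ideal_mul J (ideal_exp I n.-1)) K).

Definition minimal_gens (fs : seq R) (J : R -> Prop) : Prop :=
  ideal_eq J (gen fs) /\
  forall i : nat, (i < size fs)%N -> ~ ideal_eq J (gen (take i fs ++ drop i.+1 fs)).

Definition regular_seq_mod (K : R -> Prop) (fs : seq R) : Prop :=
  (forall i : nat, (i < size fs)%N -> forall x : R,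
     ideal_add K (gen (take i fs)) (fs`_i * x) -> ideal_add K (gen (take i fs)) x)
  /\ ~ ideal_add K (gen fs) 1.

End Ideals.

(* Main.v *)
Require Import Defs.
From HB Require Import structures.
From mathcomp Require Import all_boot all_order all_algebra.
From mathcomp Require Import ring zify.
Set Implicit Arguments. Unset Strict Implicit.
Import GRing.Theory.
Local Open Scope ring_scope.

Lemma mul_ideal {R : comNzRingType} (J K : R -> Prop) :
  is_ideal J -> is_ideal (ideal_mul J K).
Proof.
move=> [J0 [JD JM]]; split; [|split].
- exists 0%N, (fun _ => 0), (fun _ => 0); split; first by case.
  by rewrite big_ord0.
- move=> x y [n1 [a1 [b1 [H1 ->]]]] [n2 [a2 [b2 [H2 ->]]]].
  exists (n1 + n2)%N.
  exists (fun k => match split k with inl i => a1 i | inr i => a2 i end).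
  exists (fun k => match split k with inl i => b1 i | inr i => b2 i end).
  split; first by move=> k; case: (split k).
  rewrite big_split_ord /=; congr (_ + _); apply: eq_bigr => i _.
  + by rewrite (unsplitK (inl i)).
  + by rewrite (unsplitK (inr i)).
- move=> r x [n [a [b [H ->]]]].
  exists n, (fun k => r * a k), b; split.
  + by move=> k; have [Ha Hb] := H k; split => //; apply: JM.
  + by rewrite mulr_sumr; apply: eq_bigr => i _; rewrite mulrA.
Qed.

Lemma exp_ideal {R : comNzRingType} (I : R -> Prop) n :
  is_ideal I -> is_ideal (ideal_exp I n).
Proof.
move=> HI; case: n => [|n]; last exact: mul_ideal.
by split; [|split].
Qed.

Lemma ideal_sum {R : comNzRingType} (J : R -> Prop) n (F : 'I_n -> R) :
  is_ideal J -> (forall k, J (F k)) -> J (\sum_(k < n) F k).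
Proof.
move=> [J0 [JD JM]] HF; apply: (big_ind J) => //.
Qed.

Lemma mul_sub_l {R : comNzRingType} (J K : R -> Prop) :
  is_ideal J -> ideal_sub (ideal_mul J K) J.
Proof.
move=> HJ x [n [a [b [H ->]]]]; apply: ideal_sum => // k.
by rewrite mulrC; case: HJ => _ [_ JM]; apply: JM; case: (H k).
Qed.

Lemma mul_mono_l {R : comNzRingType} (J J' K : R -> Prop) :
  ideal_sub J J' -> ideal_sub (ideal_mul J K) (ideal_mul J' K).
Proof.
move=> HJ x [n [a [b [H ->]]]]; exists n, a, b; split => // k.
by case: (H k) => ? ?; split => //; apply: HJ.
Qed.

Lemma mul_single {R : comNzRingType} (J K : R -> Prop) a b :
  J a -> K b -> ideal_mul J K (a * b).
Proof.
move=> Ha Hb; exists 1%N, (fun _ => a), (fun _ => b); split => //.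
by rewrite big_ord1.
Qed.

Lemma exp_mulI {R : comNzRingType} (I : R -> Prop) n x y :
  I x -> ideal_exp I n.-1 y -> ideal_exp I n (x * y).
Proof. by case: n => [|n] //= Hx Hy; apply: mul_single. Qed.

Lemma mul_expS {R : comNzRingType} (J I : R -> Prop) k j f :
  ideal_mul J (ideal_exp I k) j -> I f -> ideal_mul J (ideal_exp I k.+1) (j * f).
Proof.
move=> [n [a [b [H ->]]]] Hf; exists n, a, (fun i => f * b i); split.
  by move=> i; case: (H i) => ? ?; split => //; apply: mul_single.
by rewrite mulr_suml; apply: eq_bigr => i _; rewrite -mulrA [b i * f]mulrC.
Qed.

Lemma mul_sub_exp {R : comNzRingType} (J I : R -> Prop) n :
  ideal_sub J I -> (1 <= n)%N -> ideal_sub (ideal_mul J (ideal_exp I n.-1)) (ideal_exp I n).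
Proof. by case: n => // n HJ _; apply: mul_mono_l. Qed.

Lemma gen_nat {R : comNzRingType} (s : seq R) x :
  gen s x <-> exists g : nat -> R, x = \sum_(0 <= k < size s) g k * s`_k.
Proof.
split.
- move=> [r ->].
  exists (fun k => if insub k is Some i then r i else 0).
  rewrite big_mkord; apply: eq_bigr => i _; by rewrite valK.
- move=> [g ->]; exists (fun i => g i); by rewrite big_mkord.
Qed.

Lemma gen_take {R : comNzRingType} (fs : seq R) p x : (p <= size fs)%N ->
  gen (take p fs) x <-> exists g : nat -> R, x = \sum_(0 <= k < p) g k * fs`_k.
Proof.
move=> hp; rewrite gen_nat size_takel //.
have E g : \sum_(0 <= k < p) g k * (take p fs)`_k = \sum_(0 <= k < p) g k * fs`_k.
  by apply: eq_big_nat => k /andP[_ hk]; rewrite nth_take.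
by split => -[g ->]; exists g; rewrite E.
Qed.

Definition lcI {R : comNzRingType} (I : R -> Prop) (fs : seq R) (m p : nat) (x : R) :=
  exists g : nat -> R, (forall k, ideal_exp I m (g k)) /\
    x = \sum_(0 <= k < p) g k * fs`_k.

Lemma lcI_add {R : comNzRingType} (I : R -> Prop) fs m p x y : is_ideal I ->
  lcI I fs m p x -> lcI I fs m p y -> lcI I fs m p (x + y).
Proof.
move=> HI [g [Hg ->]] [h [Hh ->]]; exists (fun k => g k + h k); split.
  by move=> k; case: (exp_ideal m HI) => _ [D _]; apply: D.
by rewrite -big_split; apply: eq_bigr => k _; rewrite mulrDl.
Qed.

Lemma lcI_opp {R : comNzRingType} (I : R -> Prop) fs m p x : is_ideal I ->
  lcI I fs m p x -> lcI I fs m p (- x).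
Proof.
move=> HI [g [Hg ->]]; exists (fun k => - 1 * g k); split.
  by move=> k; case: (exp_ideal m HI) => _ [_ M]; apply: M.
by rewrite -sumrN; apply: eq_bigr => k _; rewrite mulN1r mulNr.
Qed.

Lemma lcI_widen {R : comNzRingType} (I : R -> Prop) fs m p q x : is_ideal I ->
  (p <= q)%N -> lcI I fs m p x -> lcI I fs m q x.
Proof.
move=> HI hpq [g [Hg ->]]; exists (fun k => if (k < p)%N then g k else 0); split.
  by move=> k; case: ifP => // _; case: (exp_ideal m HI) => [].
rewrite (big_nat_widen _ _ _ _ _ hpq) big_mkcond /=.
by apply: eq_bigr => k _; case: ifP; rewrite ?mul0r.
Qed.

Lemma lcI_0 {R : comNzRingType} (I : R -> Prop) fs m p : is_ideal I ->
  lcI I fs m p 0.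
Proof.
move=> HI; exists (fun _ => 0); split; first by move=> _; case: (exp_ideal m HI).
by rewrite big1 // => k _; rewrite mul0r.
Qed.

Lemma lcI_scale {R : comNzRingType} (I : R -> Prop) fs m p a b : is_ideal I ->
  lcI I fs 0 p a -> ideal_exp I m b -> lcI I fs m p (a * b).
Proof.
move=> HI [g [_ ->]] Hb; exists (fun k => g k * b); split.
  by move=> k /=; apply: (proj2 (proj2 (exp_ideal m HI))).
by rewrite mulr_suml; apply: eq_bigr => k _; rewrite mulrAC.
Qed.

Lemma gen_lc {R : comNzRingType} (I : R -> Prop) fs p x : (p <= size fs)%N ->
  gen (take p fs) x <-> lcI I fs 0 p x.
Proof.
move=> hp; rewrite gen_take //; split.
  by move=> [g ->]; exists g.
by move=> [g [_ ->]]; exists g.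
Qed.

Lemma gen_nth {R : comNzRingType} (s : seq R) k : (k < size s)%N -> gen s s`_k.
Proof.
move=> hk; apply/gen_nat; exists (fun l => (l == k)%:R).
rewrite (bigD1_seq k) /= ?mem_index_iota ?iota_uniq //.
rewrite eqxx mul1r big1 ?addr0 // => l /negbTE ->; by rewrite mul0r.
Qed.

Lemma lemL {R : comNzRingType} (I : R -> Prop) fs n i e : is_ideal I ->
  strongly_aluffi_tf fs I -> (1 <= n)%N -> (i <= size fs)%N ->
  gen (take i fs) e -> ideal_exp I n e -> lcI I fs n.-1 i e.
Proof.
move=> HI Hs hn hi He HIe.
case: i hi He => [|i] hi He.
  move/(gen_lc I): He => /(_ hi) [g [_ ->]].
  by rewrite big_geq //; apply: lcI_0.
have := (Hs i.+1 hi n hn e).1 (conj He HIe).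
move=> [N [a [b [H ->]]]].
apply: (big_ind (lcI I fs n.-1 i.+1)).
- exact: lcI_0.
- by move=> x y; apply: lcI_add.
- move=> k _; case: (H k) => Ha Hb; apply: lcI_scale => //.
  by apply/gen_lc.
Qed.

Lemma iadd {R : comNzRingType} (J : R -> Prop) x y : is_ideal J -> J x -> J y -> J (x + y).
Proof. by case=> _ [D _]; apply: D. Qed.
Lemma imul {R : comNzRingType} (J : R -> Prop) r x : is_ideal J -> J x -> J (r * x).
Proof. by case=> _ [_ M]; apply: M. Qed.
Lemma imulr {R : comNzRingType} (J : R -> Prop) r x : is_ideal J -> J x -> J (x * r).
Proof. by rewrite mulrC; apply: imul. Qed.
Lemma isub {R : comNzRingType} (J : R -> Prop) x y : is_ideal J -> J x -> J y -> J (x - y).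
Proof. by move=> HJ Hx Hy; apply: iadd => //; rewrite -mulN1r; apply: imul. Qed.
Lemma i0 {R : comNzRingType} (J : R -> Prop) : is_ideal J -> J 0.
Proof. by case. Qed.

Lemma gen_full {R : comNzRingType} (I : R -> Prop) fs x :
  gen fs x <-> lcI I fs 0 (size fs) x.
Proof. by have := gen_lc I x (leqnn (size fs)); rewrite take_size. Qed.

Lemma lemB {R : comNzRingType} (J1 J2 I : R -> Prop) (fs : seq R) :
  is_ideal J1 -> is_ideal J2 -> is_ideal I ->
  ideal_eq J1 (gen fs) -> ideal_sub J1 I -> ideal_sub J2 I ->
  aluffi_tf_mod J1 J2 I -> strongly_aluffi_tf fs I -> regular_seq_mod J2 fs ->
  forall m p, (p <= size fs)%N -> forall x, ideal_exp I m x ->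
  ideal_add J2 (gen (take p fs)) x ->
  exists j c, [/\ J2 j, ideal_exp I m j, lcI I fs m.-1 p c & x = j + c].
Proof.
move=> HJ1 HJ2 HI Hgen HJ1I HJ2I Hmod Hs Hreg.
have fI k : (k < size fs)%N -> I fs`_k.
  by move=> hk; apply: HJ1I; apply/Hgen; apply: gen_nth.
elim=> [|m IH] p hp x Hx [a [b [Ha [Hb Hxab]]]]; subst x.
  by exists a, b; split => //; apply/gen_lc.
have Hb1 : J1 b.
  apply/Hgen; apply/(gen_full I); apply: (lcI_widen HI hp).
  by apply/gen_lc.
have := (Hmod m.+1 erefl (a + b)).1.
case.
  split; first by exists a, b.
  by exists (a + b), 0; split; [idtac | split; [exact: i0 HJ1 | rewrite addr0]].
move=> y [e [Hy [He Hxe]]].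
have HyI : ideal_exp I m.+1 y by apply: (mul_sub_exp HJ2I).
have Hel : lcI I fs m (size fs) e.
  apply: (lemL (n := m.+1) HI Hs) => //; first by rewrite take_size; apply/Hgen.
  have -> : e = (a + b) - y by rewrite Hxe addrC addKr.
  by apply: isub => //; apply: exp_ideal.
have claim : forall k, (k <= size fs - p)%N -> exists j c,
    [/\ J2 j, ideal_exp I m.+1 j, lcI I fs m (size fs - k) c & a + b = j + c].
  elim=> [|k IHk] hk.
    rewrite subn0; exists y, e; split => //.
    exact: (mul_sub_l HJ2 Hy).
  set q := (size fs - k.+1)%N.
  have hq1 : (size fs - k = q.+1)%N by rewrite /q; lia.
  have hqs : (q < size fs)%N by rewrite /q; lia.
  have hpq : (p <= q)%N by rewrite /q; lia.
  have [j [c [Hj HjI [g [Hg Hc]] Hx']]] := IHk (ltnW hk).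
  rewrite hq1 big_nat_recr //= in Hc.
  set S := \sum_(0 <= i < q) g i * fs`_i in Hc.
  have reg : ideal_add J2 (gen (take q fs)) (fs`_q * g q).
    exists (a - j), (b - S); split; first by apply: isub.
    split.
      apply/(gen_lc I _ (ltnW hqs)); apply: lcI_add => //.
        by apply: (lcI_widen HI hpq); apply/gen_lc.
      by apply: lcI_opp => //; exists g.
    have -> : a = j + c - b by rewrite -Hx' addrK.
    rewrite Hc; ring.
  have [j' [c' [Hj' Hj'I [h [Hh Hc']] Hgq]]] :=
    IH q (ltnW hqs) (g q) (Hg q) (Hreg.1 q hqs (g q) reg).
  exists (j + fs`_q * j'), (\sum_(0 <= l < q) (g l + fs`_q * h l) * fs`_l).
  split.
  - by apply: iadd => //; apply: imul.
  - apply: iadd => //; first exact: exp_ideal.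
    by apply: (exp_mulI (n := m.+1)) => //; apply: fI.
  - exists (fun l => g l + fs`_q * h l); split => // l.
    apply: iadd; first exact: exp_ideal.
      exact: Hg.
    by apply: exp_mulI => //; apply: fI.
  - have -> : \sum_(0 <= l < q) (g l + fs`_q * h l) * fs`_l =
                S + fs`_q * \sum_(0 <= l < q) h l * fs`_l.
      rewrite (eq_bigr (fun l => g l * fs`_l + fs`_q * (h l * fs`_l))); last first.
        by move=> l _; rewrite mulrDl mulrA.
      by rewrite big_split /= mulr_sumr.
    rewrite Hx' Hc Hgq Hc'; ring.
have [j [c [Hj HjI Hc Hx']]] := claim (size fs - p)%N (leqnn _).
by rewrite subKn // in Hc; exists j, c; split.
Qed.

Lemma lemA {R : comNzRingType} (J1 J2 I : R -> Prop) (fs : seq R) :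
  is_ideal J1 -> is_ideal J2 -> is_ideal I ->
  ideal_eq J1 (gen fs) -> ideal_sub J1 I -> ideal_sub J2 I ->
  aluffi_tf_mod J1 J2 I -> strongly_aluffi_tf fs I -> regular_seq_mod J2 fs ->
  forall n, (forall n', (1 <= n')%N -> (n' < n)%N -> forall x, J2 x ->
     ideal_exp I n' x -> ideal_mul J2 (ideal_exp I n'.-1) x) ->
  (1 <= n)%N -> forall i, (i <= size fs)%N -> forall z, J2 z ->
  ideal_exp I n z -> gen (take i fs) z -> ideal_mul J2 (ideal_exp I n.-1) z.
Proof.
move=> HJ1 HJ2 HI Hgen HJ1I HJ2I Hmod Hs Hreg n IHn hn.
have fI k : (k < size fs)%N -> I fs`_k.
  by move=> hk; apply: HJ1I; apply/Hgen; apply: gen_nth.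
have HM := mul_ideal (ideal_exp I n.-1) HJ2.
elim=> [|i IHi] hi z Hz HzI Hzg.
  move/(gen_lc I _ hi): Hzg => [g [_ ->]]; rewrite big_geq //; exact: i0.
have [g [Hg Hze]] := lemL HI Hs hn hi Hzg HzI.
rewrite big_nat_recr //= in Hze.
set S := \sum_(0 <= k < i) g k * fs`_k in Hze.
have hi' : (i < size fs)%N by [].
have reg : ideal_add J2 (gen (take i fs)) (fs`_i * g i).
  exists z, (- S); split => //; split.
    by apply/(gen_lc I _ (ltnW hi')); apply: lcI_opp => //; exists g.
  by rewrite Hze; ring.
have [j [c [Hj HjI [h [_ Hce]] Hgi]]] :=
  lemB HJ1 HJ2 HI Hgen HJ1I HJ2I Hmod Hs Hreg (ltnW hi') (Hg i) (Hreg.1 i hi' (g i) reg).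
have Hjf : ideal_mul J2 (ideal_exp I n.-1) (j * fs`_i).
  case En : n hn HjI => [|[|n'']] // hn' HjI.
    by rewrite -[j * _]mulr1; apply: mul_single => //; apply: imulr.
  apply: mul_expS; last exact: fI.
  by apply: (IHn n''.+1) => //; rewrite En.
set z' := \sum_(0 <= l < i) (g l + fs`_i * h l) * fs`_l.
have Hz'e : z = z' + j * fs`_i.
  rewrite /z' (eq_bigr (fun l => g l * fs`_l + fs`_i * (h l * fs`_l))); last first.
    by move=> l _; rewrite mulrDl mulrA.
  rewrite big_split /= -mulr_sumr -Hce -/S Hze Hgi; ring.
have Hz'd : z' = z - j * fs`_i by rewrite Hz'e addrK.
rewrite Hz'e; apply: iadd => //.
apply: IHi; first exact: ltnW.
- by rewrite Hz'd; apply: isub => //; apply: imulr.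
- rewrite Hz'd; apply: isub => //; first exact: exp_ideal.
  by rewrite mulrC; apply: exp_mulI => //; apply: fI.
- apply/(gen_lc I _ (ltnW hi')); exists (fun l => g l + fs`_i * h l); split => //.
Qed.

Unset Implicit Arguments. Set Strict Implicit.

Theorem theorem2p15 (R : comNzRingType) (J1 J2 I : R -> Prop) (fs : seq R) :
  noetherian R ->
  is_ideal J1 -> is_ideal J2 -> is_ideal I ->
  ideal_sub J1 I -> ideal_sub J2 I ->
  aluffi_tf_mod J1 J2 I ->
  minimal_gens fs J1 ->
  strongly_aluffi_tf fs I ->
  regular_seq_mod J2 fs ->
  aluffi_tf J2 I.
Proof.
move=> _ HJ1 HJ2 HI HJ1I HJ2I Hmod [Hgen _] Hs Hreg.
have main : forall N n, (n < N)%N -> (1 <= n)%N -> forall x, J2 x ->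
    ideal_exp I n x -> ideal_mul J2 (ideal_exp I n.-1) x.
  elim=> [|N IHN] n // hnN hn x Hx HxI.
  have := (Hmod n hn x).1.
  case.
    by split; exists x, 0; (split; [done | split; [exact: i0 HJ1 | rewrite addr0]]).
  move=> y [e [Hy [He Hxe]]].
  rewrite Hxe; apply: iadd; first exact: mul_ideal.
    exact: Hy.
  have Hed : e = x - y by rewrite Hxe addrC addKr.
  apply: (lemA HJ1 HJ2 HI Hgen HJ1I HJ2I Hmod Hs Hreg _ hn (leqnn (size fs))) => //.
  - by move=> n' h1 h2; apply: IHN => //; apply: leq_trans h2 hnN.
  - rewrite Hed; apply: isub => //; exact: (mul_sub_l HJ2 Hy).
  - rewrite Hed; apply: isub => //; first exact: exp_ideal.
    exact: (mul_sub_exp HJ2I hn Hy).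
  - by rewrite take_size; apply/Hgen.
move=> n hn x; split.
  by move=> [Hx HxI]; apply: (main n.+1 n).
move=> Hx; split; first exact: (mul_sub_l HJ2 Hx).
exact: (mul_sub_exp HJ2I hn Hx).
Qed.
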